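(* Let $q \in C^1(\mathbb{R}^n,\mathbb{R})$ be a scalar function such that there exists $m$ with $q(\mathbf{x}) = f(x_m)\cdot \mathbf{x}_{i\neq m}^{\beta}$ for a multi-index $\beta\in\mathbb{N}_0^{n-1}$ and $f$ any function of $x_m$ that can be integrated. Set $\lambda = \left\lceil \frac{|\beta|-1}{2}\right\rceil$ and $W(\mathbf{x}) = \mathcal{A}_{x_m}^{2\lambda+2} q(\mathbf{x}) = \mathbf{x}_{i\neq m}^{\beta}\, \mathcal{A}_{x_m}^{2\lambda+2} f(x_m)$. Then $$Q(\mathbf{x}) := \sum_{p=0}^{\lambda} (-1)^p\, \partial_{x_m}^{2\lambda-2p}\, \Delta_{\setminus m}^{p} W(\mathbf{x}) = \sum_{p=0}^{\lambda} (-1)^p\, \mathcal{A}_{x_m}^{2+2p}\, \Delta_{\setminus m}^{p} q(\mathbf{x})$$ satisfies $\Delta Q = q$, where $\Delta=\sum_{i=1}^n\partial_{x_i}^2$.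
   Context: $\mathbf{x}_{i\neq m}^{\beta}$ denotes $\prod_{i\neq m} x_i^{\beta_i}$ and $|\beta|$ its total degree; $\lceil h\rceil$ is the least integer $\ge h$. The incomplete Laplacian is $\Delta_{\setminus m} f := \sum_{i\neq m}\partial_{x_i}^2 f$, with $\Delta_{\setminus m}^p$ its $p$-fold application. The antiderivative is $\mathcal{A}_{x_j} f(\mathbf{x}) := \int_{x_0}^{x_j} f(x_1,\dots,\xi_j,\dots,x_n)\,d\xi_j$ with freely chosen lower limit $x_0$, and $\mathcal{A}_{x_j}^p := \mathcal{A}_{x_j}^{p-1}\mathcal{A}_{x_j}$ (repeated integration). Zeroth powers of these operators are the identity. *)

(* Defs.v *)
From Stdlib Require Import Reals Lra Lia ZArith List.
From Coquelicot Require Import Coquelicot.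
Import ListNotations.
Open Scope R_scope.

(* A point of R^n is represented as x : nat -> R, coordinate i (0 <= i < n)
   being x i; coordinates >= n are never used by any object below. *)
Definition point := nat -> R.

Definition upd (x : point) (j : nat) (t : R) : point :=
  fun i => if Nat.eqb i j then t else x i.

Definition partial (j : nat) (g : point -> R) : point -> R :=
  fun x => Derive (fun t => g (upd x j t)) (x j).

Definition idx_wo (n m : nat) : list nat :=
  filter (fun i => negb (Nat.eqb i m)) (seq 0 n).

Definition laplacian (n : nat) (g : point -> R) : point -> R :=
  fun x => fold_right Rplus 0 (map (fun i => partial i (partial i g) x) (seq 0 n)).

Definition laplacian_wo (n m : nat) (g : point -> R) : point -> R :=
  fun x => fold_right Rplus 0 (map (fun i => partial i (partial i g) x) (idx_wo n m)).

Definition antider (j : nat) (x0 : R) (g : point -> R) : point -> R :=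
  fun x => RInt (fun xi => g (upd x j xi)) x0 (x j).

Definition antider1 (x0 : R) (h : R -> R) : R -> R :=
  fun t => RInt h x0 t.

Definition opow {A : Type} (p : nat) (op : A -> A) (a : A) : A := Nat.iter p op a.

Definition monomial (n m : nat) (beta : nat -> nat) (x : point) : R :=
  fold_right Rmult 1 (map (fun i => x i ^ beta i) (idx_wo n m)).

Definition mdeg (n m : nat) (beta : nat -> nat) : nat :=
  fold_right Nat.add 0%nat (map beta (idx_wo n m)).

(* ceiling of the rational a/b for integers a and b > 0: ceil(a/b) = -((-a) div b) *)
Definition zceil_div (a b : Z) : Z := (- ((- a) / b))%Z.

Definition lam (k : nat) : nat := Z.to_nat (zceil_div (Z.of_nat k - 1) 2).

Definition sum0 (N : nat) (F : nat -> R) : R :=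
  fold_right Rplus 0 (map F (seq 0 (S N))).

(* Main.v *)
Require Import Defs.
From Stdlib Require Import Reals List Lra Lia ZArith FunctionalExtensionality.
From Coquelicot Require Import Coquelicot.
Open Scope R_scope.

Lemma upd_same x j t : upd x j t j = t.
Proof. unfold upd. now rewrite Nat.eqb_refl. Qed.

Lemma upd_other x j t i : i <> j -> upd x j t i = x i.
Proof. intro H. unfold upd. destruct (Nat.eqb_spec i j); [congruence|auto]. Qed.

Lemma upd_comm x i j s t : i <> j -> upd (upd x i t) j s = upd (upd x j s) i t.
Proof. intro H. apply functional_extensionality; intro k. unfold upd.
  destruct (Nat.eqb_spec k j), (Nat.eqb_spec k i); subst; try congruence; auto. Qed.

Lemma upd_upd x i s t : upd (upd x i s) i t = upd x i t.
Proof. apply functional_extensionality; intro k. unfold upd. destruct (Nat.eqb k i); auto. Qed.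

Lemma upd_id x i : upd x i (x i) = x.
Proof. apply functional_extensionality; intro k. unfold upd. destruct (Nat.eqb_spec k i); subst; auto. Qed.

Lemma partial_ext i g h : (forall x, g x = h x) -> forall x, partial i g x = partial i h x.
Proof. intros H x. unfold partial. apply Derive_ext. intro; apply H. Qed.

Lemma fold_ext_in (A : Type) (l : list A) (a b : A -> R) :
  (forall i, In i l -> a i = b i) ->
  fold_right Rplus 0 (map a l) = fold_right Rplus 0 (map b l).
Proof. intro H. f_equal. apply map_ext_in. auto. Qed.

Lemma lapwo_ext n m g h : (forall x, g x = h x) -> forall x, laplacian_wo n m g x = laplacian_wo n m h x.
Proof. intros H x. unfold laplacian_wo. apply fold_ext_in. intros.
  apply partial_ext. apply partial_ext. auto. Qed.

Lemma lap_ext n g h : (forall x, g x = h x) -> forall x, laplacian n g x = laplacian n h x.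
Proof. intros H x. unfold laplacian. apply fold_ext_in. intros.
  apply partial_ext. apply partial_ext. auto. Qed.

Lemma antider_ext j x0 g h : (forall x, g x = h x) -> forall x, antider j x0 g x = antider j x0 h x.
Proof. intros H x. unfold antider. apply RInt_ext. intros; apply H. Qed.

Lemma opow_ext (op : (point -> R) -> (point -> R)) :
  (forall g h, (forall x, g x = h x) -> forall x, op g x = op h x) ->
  forall p g h, (forall x, g x = h x) -> forall x, opow p op g x = opow p op h x.
Proof. intros Hop p. induction p; intros g h H x; unfold opow in *; simpl.
  - auto.
  - apply Hop. intro; apply IHp; auto. Qed.

Lemma idx_wo_neq n m i : In i (idx_wo n m) -> i <> m.
Proof. unfold idx_wo. intro H. apply filter_In in H. destruct H as [_ H].
  destruct (Nat.eqb_spec i m); simpl in H; congruence. Qed.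

Fixpoint D (d : nat) (g : point -> R) : Prop :=
  match d with
  | O => exists c, forall x, g x = c
  | S d' => (forall i x, ex_derive (fun t => g (upd x i t)) (x i)) /\ forall i, D d' (partial i g)
  end.

Lemma D_ex d g : D d g -> forall i x, ex_derive (fun t => g (upd x i t)) (x i).
Proof. destruct d; simpl.
  - intros [c Hc] i x. apply ex_derive_ext with (fun _ => c). intro; auto. apply ex_derive_const.
  - tauto. Qed.

Lemma D0_partial g : D 0 g -> forall i x, partial i g x = 0.
Proof. intros [c Hc] i x. unfold partial. rewrite (Derive_ext _ (fun _ => c)). apply Derive_const. auto. Qed.

Lemma D_partial d g : D d g -> forall i, D (pred d) (partial i g).
Proof. destruct d; simpl.
  - intros H i. exists 0. apply D0_partial; auto.
  - tauto. Qed.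

Lemma D_ext d : forall g h, (forall x, g x = h x) -> D d g -> D d h.
Proof. induction d; simpl; intros g h H.
  - intros [c Hc]. exists c. intro; rewrite <- H; auto.
  - intros [H1 H2]. split.
    + intros i x. eapply ex_derive_ext; [|apply H1]. intro; apply H.
    + intro i. eapply IHd; [|apply H2]. apply partial_ext; auto. Qed.

Lemma D_mono d : forall g, D d g -> D (S d) g.
Proof. induction d; intros g H.
  - split. apply D_ex with 0%nat; auto. intro i. exists 0. apply D0_partial; auto.
  - destruct H as [H1 H2]. split; auto. Qed.

Lemma D_le d e g : (d <= e)%nat -> D d g -> D e g.
Proof. induction 1; auto. intro; apply D_mono; auto. Qed.

Lemma D_const d c : D d (fun _ => c).
Proof. apply D_le with 0%nat. lia. exists c; auto. Qed.

Lemma D_plus d : forall g h, D d g -> D d h -> D d (fun x => g x + h x).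
Proof. induction d; simpl; intros g h.
  - intros [c Hc] [e He]. exists (c+e). intro; rewrite Hc, He; auto.
  - intros [G1 G2] [H1 H2]. split.
    + intros i x. apply (ex_derive_plus (fun t => g (upd x i t)) (fun t => h (upd x i t))); auto.
    + intro i. apply D_ext with (fun x => partial i g x + partial i h x).
      * intro x. unfold partial. symmetry. apply (Derive_plus (fun t => g (upd x i t)) (fun t => h (upd x i t))); auto.
      * apply IHd; auto. Qed.

Lemma D_scal d : forall g c, D d g -> D d (fun x => c * g x).
Proof. induction d; simpl; intros g c.
  - intros [e He]. exists (c*e). intro; rewrite He; auto.
  - intros [G1 G2]. split.
    + intros i x. apply ex_derive_scal; auto.
    + intro i. apply D_ext with (fun x => c * partial i g x).
      * intro x. unfold partial. symmetry. apply Derive_scal.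
      * apply IHd; auto. Qed.

Lemma D_mult d : forall a b g h, (a + b <= d)%nat -> D a g -> D b h -> D d (fun x => g x * h x).
Proof. induction d; intros a b g h Hab Hg Hh.
  - assert (a = 0%nat) by lia; assert (b = 0%nat) by lia; subst.
    destruct Hg as [c Hc], Hh as [e He]. exists (c*e). intro; rewrite Hc, He; auto.
  - destruct a as [|a].
    + destruct Hg as [c Hc]. apply D_ext with (fun x => c * h x). intro; rewrite Hc; auto.
      apply D_scal. apply D_le with b; auto; lia.
    + destruct b as [|b].
      * destruct Hh as [c Hc]. apply D_ext with (fun x => c * g x). intro; rewrite Hc; ring.
        apply D_scal. apply D_le with (S a); auto; lia.
      * split.
        -- intros i x. apply ex_derive_mult; eapply D_ex; eauto.
        -- intro i. apply D_ext with (fun x => partial i g x * h x + g x * partial i h x).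
           ++ intro x. unfold partial. symmetry.
              rewrite (Derive_mult (fun t => g (upd x i t)) (fun t => h (upd x i t))).
              rewrite upd_id. auto. eapply D_ex; eauto. eapply D_ex; eauto.
           ++ apply D_plus.
              ** apply IHd with a (S b); [lia| |auto]. apply (D_partial (S a)); auto.
              ** apply IHd with (S a) b; [lia|auto|]. apply (D_partial (S b)); auto. Qed.
Lemma D_coord j : D 1 (fun x => x j).
Proof. split.
  - intros i x. unfold upd. destruct (Nat.eqb j i). apply ex_derive_id. apply ex_derive_const.
  - intro i. exists (if Nat.eqb j i then 1 else 0). intro x. unfold partial, upd.
    destruct (Nat.eqb j i). apply Derive_id. apply Derive_const. Qed.

Lemma D_pow j k : D k (fun x => x j ^ k).
Proof. induction k.
  - simpl. exists 1; auto.
  - apply (D_mult (S k) 1 k (fun x => x j) (fun x => x j ^ k)); auto. apply D_coord. Qed.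

Lemma D_monomial_gen (beta : nat -> nat) l :
  D (fold_right Nat.add 0%nat (map beta l)) (fun x => fold_right Rmult 1 (map (fun i => x i ^ beta i) l)).
Proof. induction l.
  - exists 1; auto.
  - apply (D_mult _ (beta a) (fold_right Nat.add 0%nat (map beta l)) (fun x => x a ^ beta a)); simpl; auto. apply D_pow. Qed.
Definition indep (m : nat) (g : point -> R) := forall x s, g (upd x m s) = g x.

Lemma indep_partial m i g : i <> m -> indep m g -> indep m (partial i g).
Proof. intros Him H x s. unfold partial. rewrite upd_other by auto.
  apply Derive_ext. intro t. rewrite upd_comm by auto. apply H. Qed.

Lemma indep_lapwo n m g : indep m g -> indep m (laplacian_wo n m g).
Proof. intros H x s. unfold laplacian_wo. apply fold_ext_in. intros i Hi.
  apply idx_wo_neq in Hi. apply indep_partial; auto. apply indep_partial; auto. Qed.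

Lemma indep_monomial n m beta : indep m (monomial n m beta).
Proof. intros x s. unfold monomial. f_equal. apply map_ext_in. intros i Hi.
  apply idx_wo_neq in Hi. rewrite upd_other; auto. Qed.

Lemma D_sum_list d (A : Type) (l : list A) (a : A -> point -> R) :
  (forall i, In i l -> D d (a i)) -> D d (fun x => fold_right Rplus 0 (map (fun i => a i x) l)).
Proof. induction l; simpl; intros H.
  - apply D_const.
  - apply D_plus; auto. Qed.

Lemma D_lapwo n m d g : D d g -> D (pred (pred d)) (laplacian_wo n m g).
Proof. intro H. unfold laplacian_wo. apply D_sum_list with (a := fun i => partial i (partial i g)).
  intros i _. apply D_partial. apply D_partial. auto. Qed.

Lemma D1_lapwo n m g : D 1 g -> forall x, laplacian_wo n m g x = 0.
Proof. intros H x. unfold laplacian_wo. rewrite (fold_ext_in _ _ _ (fun _ => 0)).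
  - induction (idx_wo n m); simpl; auto. rewrite IHl. ring.
  - intros i _. apply D0_partial. apply (D_partial 1). auto. Qed.
Lemma fold_mult_r (A : Type) (l : list A) (a : A -> R) c :
  fold_right Rplus 0 (map (fun i => a i * c) l) = fold_right Rplus 0 (map a l) * c.
Proof. induction l; simpl. ring. rewrite IHl. ring. Qed.

Lemma partial_prod_i m P H i : i <> m ->
  forall y, partial i (fun y => P y * H (y m)) y = partial i P y * H (y m).
Proof. intros Hi y. unfold partial.
  rewrite (Derive_ext _ (fun t => H (y m) * P (upd y i t))).
  rewrite Derive_scal. ring. intro t. rewrite upd_other by auto. ring. Qed.

Lemma partial_prod_m m P H : indep m P ->
  forall y, partial m (fun y => P y * H (y m)) y = P y * Derive H (y m).
Proof. intros HP y. unfold partial.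
  rewrite (Derive_ext _ (fun t => P y * H t)). apply Derive_scal.
  intro t. rewrite HP, upd_same. auto. Qed.

Lemma lapwo_prod n m P H : forall x,
  laplacian_wo n m (fun y => P y * H (y m)) x = laplacian_wo n m P x * H (x m).
Proof. intro x. unfold laplacian_wo. rewrite <- fold_mult_r. apply fold_ext_in.
  intros i Hi. apply idx_wo_neq in Hi.
  rewrite (partial_ext i _ (fun y => partial i P y * H (y m))).
  apply partial_prod_i; auto. apply partial_prod_i; auto. Qed.

Lemma antider_prod m x0 P H : indep m P -> (forall a b, ex_RInt H a b) ->
  forall x, antider m x0 (fun y => P y * H (y m)) x = P x * antider1 x0 H (x m).
Proof. intros HP HH x. unfold antider, antider1.
  rewrite (RInt_ext _ (fun t => scal (P x) (H t))).
  rewrite (RInt_scal (V:=R_CompleteNormedModule)); auto.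
  intros t _. rewrite HP, upd_same. auto. Qed.

Section FS.
Variable f : R -> R.
Variable x0 : R.
Hypothesis Hf : forall t, ex_derive f t.
Definition F k := opow k (antider1 x0) f.

Lemma F_S k t : F (S k) t = RInt (F k) x0 t.
Proof. reflexivity. Qed.

Lemma F_der_gen k : (forall t, ex_derive (F k) t) -> forall t, is_derive (F (S k)) t (F k t).
Proof. intros H t. apply (is_derive_RInt (F k) (F (S k)) x0 t).
  - apply filter_forall. intro b. rewrite F_S. apply (RInt_correct (V:=R_CompleteNormedModule)).
    apply (ex_RInt_continuous (V:=R_CompleteNormedModule)). intros; apply (ex_derive_continuous (V:=R_NormedModule)); auto.
  - apply (ex_derive_continuous (V:=R_NormedModule)); auto. Qed.

Lemma F_ex k : forall t, ex_derive (F k) t.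
Proof. induction k. exact Hf. intro t. eexists. apply F_der_gen; auto. Qed.

Lemma F_der k t : Derive (F (S k)) t = F k t.
Proof. apply is_derive_unique. apply F_der_gen. apply F_ex. Qed.

Lemma F_RInt k a b : ex_RInt (F k) a b.
Proof. apply (ex_RInt_continuous (V:=R_CompleteNormedModule)). intros; apply (ex_derive_continuous (V:=R_NormedModule)); apply F_ex. Qed.
End FS.
Lemma lam_bound K : (K <= 2 * lam K + 1)%nat.
Proof. unfold lam, zceil_div.
  set (w := ((- (Z.of_nat K - 1)) / 2)%Z).
  assert (H1 := Z.div_mod (- (Z.of_nat K - 1)) 2 ltac:(lia)).
  assert (H2 := Z.mod_pos_bound (- (Z.of_nat K - 1)) 2 ltac:(lia)).
  fold w in H1.
  assert (0 <= - w)%Z by lia.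
  assert (Z.of_nat (Z.to_nat (- w)) = - w)%Z by (apply Z2Nat.id; lia).
  lia. Qed.

Fixpoint sumr (N : nat) (g : nat -> R) : R :=
  match N with O => g O | S N' => sumr N' g + g (S N') end.

Lemma fold_plus_c (l : list R) c : fold_right Rplus c l = fold_right Rplus 0 l + c.
Proof. induction l; simpl. ring. rewrite IHl. ring. Qed.

Lemma sum0_sumr N g : sum0 N g = sumr N g.
Proof. unfold sum0. induction N.
  - simpl. ring.
  - rewrite seq_S, map_app, fold_right_app. simpl. rewrite fold_plus_c.
    simpl in IHN. rewrite <- IHN. simpl. ring. Qed.

Lemma sum0_ext N a b : (forall p, (p <= N)%nat -> a p = b p) -> sum0 N a = sum0 N b.
Proof. intro H. unfold sum0. apply fold_ext_in. intros p Hp. apply in_seq in Hp. apply H. lia. Qed.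

Lemma sumr_ext N a b : (forall p, (p <= N)%nat -> a p = b p) -> sumr N a = sumr N b.
Proof. intro H. induction N; simpl. apply H; lia. rewrite IHN, H; auto. Qed.

Lemma fold_plus (A : Type) (l : list A) (a b : A -> R) :
  fold_right Rplus 0 (map (fun i => a i + b i) l) = fold_right Rplus 0 (map a l) + fold_right Rplus 0 (map b l).
Proof. induction l; simpl. ring. rewrite IHl. ring. Qed.

Lemma fold_sumr_swap (A : Type) (l : list A) N (a : A -> nat -> R) :
  fold_right Rplus 0 (map (fun i => sumr N (fun p => a i p)) l) = sumr N (fun p => fold_right Rplus 0 (map (fun i => a i p) l)).
Proof. induction N; simpl. auto. rewrite fold_plus, IHN. auto. Qed.

Lemma telescope N (a : nat -> R) : sumr N a + sumr N (fun p => - a (S p)) = a O - a (S N).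
Proof. induction N; simpl. ring. lra. Qed.

Lemma sumr_partial i (T : nat -> point -> R) :
  (forall p y, ex_derive (fun t => T p (upd y i t)) (y i)) ->
  forall N y, ex_derive (fun t => sumr N (fun p => T p (upd y i t))) (y i) /\
    partial i (fun x => sumr N (fun p => T p x)) y = sumr N (fun p => partial i (T p) y).
Proof. intros H N y. induction N; simpl.
  - split; auto.
  - destruct IHN as [IH1 IH2]. split.
    + apply (ex_derive_plus (fun t => sumr N (fun p => T p (upd y i t))) (fun t => T (S N) (upd y i t))); auto.
    + rewrite <- IH2. unfold partial.
      apply (Derive_plus (fun t => sumr N (fun p => T p (upd y i t))) (fun t => T (S N) (upd y i t))); auto. Qed.

Lemma fold_split m (g : nat -> R) l :
  fold_right Rplus 0 (map g l) = fold_right Rplus 0 (map (fun i => if Nat.eqb i m then g m else 0) l)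
    + fold_right Rplus 0 (map g (filter (fun i => negb (Nat.eqb i m)) l)).
Proof. induction l; simpl. ring. destruct (Nat.eqb_spec a m); simpl; subst; rewrite IHl; ring. Qed.

Lemma fold_ind_seq m c : forall k s,
  fold_right Rplus 0 (map (fun i => if Nat.eqb i m then c else 0) (seq s k)) =
  if andb (Nat.leb s m) (Nat.ltb m (s + k)) then c else 0.
Proof. induction k; intro s; simpl.
  - destruct (Nat.leb_spec s m), (Nat.ltb_spec m (s+0)); simpl; auto; lia.
  - rewrite IHk. destruct (Nat.eqb_spec s m), (Nat.leb_spec s m), (Nat.ltb_spec m (s + S k)),
      (Nat.leb_spec (S s) m), (Nat.ltb_spec m (S s + k)); simpl; try ring; lia. Qed.

Lemma lap_split n m g : (m < n)%nat ->
  fold_right Rplus 0 (map g (seq 0 n)) = g m + fold_right Rplus 0 (map g (idx_wo n m)).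
Proof. intro H. rewrite (fold_split m). unfold idx_wo. f_equal.
  rewrite fold_ind_seq. destruct (Nat.leb_spec 0 m), (Nat.ltb_spec m (0 + n)); simpl; auto; lia. Qed.

Section Main.
Variable f : R -> R.
Variable x0 : R.
Hypothesis Hf : forall t, ex_derive f t.
Variables n m : nat.

Lemma opow_S (A : Type) p (op : A -> A) a : opow (S p) op a = op (opow p op a).
Proof. reflexivity. Qed.

Lemma opow_lapwo_prod p : forall P H x,
  opow p (laplacian_wo n m) (fun y => P y * H (y m)) x = opow p (laplacian_wo n m) P x * H (x m).
Proof. induction p; intros P H x. reflexivity.
  rewrite !opow_S. rewrite (lapwo_ext n m _ (fun y => opow p (laplacian_wo n m) P y * H (y m))).
  apply lapwo_prod. apply IHp. Qed.

Lemma opow_indep p P : indep m P -> indep m (opow p (laplacian_wo n m) P).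
Proof. intro H. induction p. auto. rewrite opow_S. apply indep_lapwo; auto. Qed.

Lemma opow_antider_prod j P k : indep m P -> forall x,
  opow j (antider m x0) (fun y => P y * F f x0 k (y m)) x = P x * F f x0 (j + k) (x m).
Proof. intro HP. induction j; intro x. reflexivity.
  rewrite opow_S. rewrite (antider_ext m x0 _ (fun y => P y * F f x0 (j + k) (y m))) by auto.
  rewrite antider_prod; auto. apply F_RInt; auto. Qed.

Lemma opow_partial_prod j P k : indep m P -> (j <= k)%nat -> forall x,
  opow j (partial m) (fun y => P y * F f x0 k (y m)) x = P x * F f x0 (k - j) (x m).
Proof. intro HP. induction j; intros Hj x. rewrite Nat.sub_0_r. reflexivity.
  rewrite opow_S. rewrite (partial_ext m _ (fun y => P y * F f x0 (k - j) (y m))) by (apply IHj; lia).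
  rewrite partial_prod_m; auto. replace (k - j)%nat with (S (k - S j)) by lia.
  rewrite F_der; auto. Qed.

Section T.
Variable P : point -> R.
Variable H : R -> R.
Variable d : nat.
Hypothesis HP : D d P.
Hypothesis HPi : indep m P.
Hypothesis HH : forall t, ex_derive H t.
Hypothesis HH' : forall t, ex_derive (Derive H) t.
Let T := fun y => P y * H (y m).

Lemma T_a i y : ex_derive (fun t => T (upd y i t)) (y i).
Proof. unfold T. destruct (Nat.eq_dec i m).
  - subst. apply ex_derive_ext with (fun t => P y * H t).
    intro t. rewrite HPi, upd_same. auto. apply ex_derive_scal; auto.
  - apply ex_derive_ext with (fun t => H (y m) * P (upd y i t)).
    intro t. rewrite upd_other by congruence. apply Rmult_comm. apply ex_derive_scal. eapply D_ex; eauto. Qed.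

Lemma T_b i y : ex_derive (fun t => partial i T (upd y i t)) (y i).
Proof. unfold T. destruct (Nat.eq_dec i m).
  - subst. apply ex_derive_ext with (fun t => P y * Derive H t).
    intro t. rewrite partial_prod_m, HPi, upd_same; auto. apply ex_derive_scal; auto.
  - apply ex_derive_ext with (fun t => H (y m) * partial i P (upd y i t)).
    intro t. rewrite partial_prod_i, upd_other by congruence. apply Rmult_comm. auto. apply ex_derive_scal.
    eapply D_ex. apply D_partial; eauto. Qed.

Lemma T_c y : partial m (partial m T) y = P y * Derive (Derive H) (y m).
Proof. unfold T. rewrite (partial_ext m _ (fun y => P y * Derive H (y m))).
  apply partial_prod_m; auto. apply partial_prod_m; auto. Qed.

Lemma T_d i y : i <> m -> partial i (partial i T) y = partial i (partial i P) y * H (y m).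
Proof. intro Hi. unfold T. rewrite (partial_ext i _ (fun y => partial i P y * H (y m))).
  apply partial_prod_i; auto. apply partial_prod_i; auto. Qed.
End T.

End Main.
Lemma H_facts f x0 (Hf : forall t, ex_derive f t) p :
  let H := fun t => (-1)^p * F f x0 (S (S (2*p))) t in
  (forall t, ex_derive H t) /\ (forall t, ex_derive (Derive H) t) /\
  (forall t, Derive (Derive H) t = (-1)^p * F f x0 (2*p) t).
Proof. intro H.
  assert (E1 : forall t, Derive H t = (-1)^p * F f x0 (S (2*p)) t).
  { intro t. unfold H. rewrite Derive_scal, F_der; auto. }
  split; [|split].
  - intro t. apply ex_derive_scal. apply F_ex; auto.
  - intro t. apply (ex_derive_ext (fun t => (-1)^p * F f x0 (S (2*p)) t)).
    intro; rewrite E1; auto. apply ex_derive_scal. apply F_ex; auto.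
  - intro t. rewrite (Derive_ext _ (fun t => (-1)^p * F f x0 (S (2*p)) t)) by (intro; rewrite E1; auto).
    rewrite Derive_scal, F_der; auto. Qed.

Theorem corollary5p2 (n m : nat) (beta : nat -> nat) (f : R -> R) (x0 : R) :
  (m < n)%nat ->
  (* q = f(x_m) x^beta is C^1 on R^n, i.e. f is C^1 *)
  (forall t, ex_derive f t) ->
  (forall t, continuous (Derive f) t) ->
  let q : point -> R := fun x => f (x m) * monomial n m beta x in
  let l := lam (mdeg n m beta) in
  let W : point -> R := opow (2 * l + 2) (antider m x0) q in
  let Q1 : point -> R := fun x =>
    sum0 l (fun p => (-1) ^ p *
      opow (2 * l - 2 * p) (partial m) (opow p (laplacian_wo n m) W) x) in
  let Q2 : point -> R := fun x =>
    sum0 l (fun p => (-1) ^ p *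
      opow (2 + 2 * p) (antider m x0) (opow p (laplacian_wo n m) q) x) in
  (forall x, W x = monomial n m beta x * opow (2 * l + 2) (antider1 x0) f (x m)) /\
  (forall x, Q1 x = Q2 x) /\
  (forall x,
     (forall i, (i < n)%nat ->
        ex_derive (fun t => Q1 (upd x i t)) (x i) /\
        ex_derive (fun t => partial i Q1 (upd x i t)) (x i)) /\
     laplacian n Q1 x = q x).
Proof.
  intros Hmn Hf _ q l W Q1 Q2.
  set (K := mdeg n m beta) in *.
  set (L := fun p => opow p (laplacian_wo n m) (monomial n m beta)).
  assert (HLi : forall p, indep m (L p)).
  { intro p. apply opow_indep. apply indep_monomial. }
  assert (HLD : forall p, D (K - 2*p) (L p)).
  { induction p.
    - rewrite Nat.sub_0_r. exact (D_monomial_gen beta (idx_wo n m)).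
    - replace (K - 2 * S p)%nat with (pred (pred (K - 2*p))) by lia.
      apply D_lapwo. auto. }
  assert (Hq : forall x, q x = monomial n m beta x * F f x0 0 (x m)).
  { intro x. unfold q. simpl. ring. }
  assert (HW : forall x, W x = monomial n m beta x * F f x0 (2*l+2) (x m)).
  { intro x. unfold W.
    rewrite (opow_ext (antider m x0) (antider_ext m x0) _ q (fun y => monomial n m beta y * F f x0 0 (y m)) Hq).
    rewrite opow_antider_prod; auto. rewrite Nat.add_0_r. auto. apply indep_monomial. }
  set (T := fun p y => L p y * ((-1)^p * F f x0 (S (S (2*p))) (y m))).
  assert (HQ1 : forall x, Q1 x = sumr l (fun p => T p x)).
  { intro x. unfold Q1. rewrite sum0_sumr. apply sumr_ext. intros p Hp. unfold T.
    assert (E : forall y, opow p (laplacian_wo n m) W y = L p y * F f x0 (2*l+2) (y m)).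
    { intro y. rewrite (opow_ext _ (lapwo_ext n m) p W _ HW). apply opow_lapwo_prod. }
    rewrite (opow_ext (partial m) (partial_ext m) _ _ _ E).
    rewrite opow_partial_prod; auto; [|lia].
    replace (2*l+2 - (2*l - 2*p))%nat with (S (S (2*p))) by lia. ring. }
  assert (HQ2 : forall x, Q2 x = sumr l (fun p => T p x)).
  { intro x. unfold Q2. rewrite sum0_sumr. apply sumr_ext. intros p Hp. unfold T.
    assert (E : forall y, opow p (laplacian_wo n m) q y = L p y * F f x0 0 (y m)).
    { intro y. rewrite (opow_ext _ (lapwo_ext n m) p q _ Hq). apply opow_lapwo_prod. }
    rewrite (opow_ext (antider m x0) (antider_ext m x0) _ _ _ E).
    rewrite opow_antider_prod; auto.
    replace (2 + 2*p + 0)%nat with (S (S (2*p))) by lia. ring. }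
  split; [intro x; rewrite HW; reflexivity|].
  split; [intro x; rewrite HQ1, HQ2; reflexivity|].
  assert (Ta : forall p i y, ex_derive (fun t => T p (upd y i t)) (y i)).
  { intros p i y. destruct (H_facts f x0 Hf p) as [h1 [h2 h3]].
    exact (T_a m (L p) _ (K - 2*p) (HLD p) (HLi p) h1 i y). }
  assert (Tb : forall p i y, ex_derive (fun t => partial i (T p) (upd y i t)) (y i)).
  { intros p i y. destruct (H_facts f x0 Hf p) as [h1 [h2 h3]].
    exact (T_b m (L p) _ (K - 2*p) (HLD p) (HLi p) h2 i y). }
  assert (P1 : forall i z, partial i Q1 z = sumr l (fun p => partial i (T p) z)).
  { intros i z. rewrite (partial_ext i _ _ HQ1). apply (sumr_partial i T (fun p => Ta p i)). }
  intro x.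
  assert (P2 : forall i, partial i (partial i Q1) x = sumr l (fun p => partial i (partial i (T p)) x)).
  { intro i. rewrite (partial_ext i _ _ (P1 i)).
    apply (sumr_partial i (fun p => partial i (T p)) (fun p => Tb p i)). }
  split.
  - intros i Hi. split.
    + apply (ex_derive_ext (fun t => sumr l (fun p => T p (upd x i t)))).
      intro; rewrite HQ1; auto. apply (sumr_partial i T (fun p => Ta p i)).
    + apply (ex_derive_ext (fun t => sumr l (fun p => partial i (T p) (upd x i t)))).
      intro; rewrite P1; auto. apply (sumr_partial i (fun p => partial i (T p)) (fun p => Tb p i)).
  - unfold laplacian. rewrite (lap_split n m) by auto.
    rewrite P2.
    rewrite (fold_ext_in _ _ _ (fun i => sumr l (fun p => partial i (partial i (L p)) x * ((-1)^p * F f x0 (S (S (2*p))) (x m))))).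
    2:{ intros i Hi. apply idx_wo_neq in Hi. rewrite P2. apply sumr_ext. intros p _.
        unfold T. apply (T_d m (L p) (fun t => (-1)^p * F f x0 (S (S (2*p))) t) i x Hi). }
    rewrite fold_sumr_swap.
    set (a := fun p => L p x * ((-1)^p * F f x0 (2*p) (x m))).
    rewrite (sumr_ext l _ a).
    2:{ intros p _. unfold T, a. destruct (H_facts f x0 Hf p) as [h1 [h2 h3]].
        rewrite (T_c m (L p) (fun t => (-1)^p * F f x0 (S (S (2*p))) t) (HLi p) x). rewrite h3. auto. }
    rewrite (sumr_ext l (fun p => fold_right Rplus 0 (map (fun i => partial i (partial i (L p)) x * ((-1)^p * F f x0 (S (S (2*p))) (x m))) (idx_wo n m))) (fun p => - a (S p))).
    2:{ intros p _. rewrite fold_mult_r. unfold a.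
        change (fold_right Rplus 0 (map (fun i => partial i (partial i (L p)) x) (idx_wo n m))) with (L (S p) x).
        replace (2 * S p)%nat with (S (S (2*p))) by lia. simpl pow. ring. }
    rewrite telescope. unfold a.
    assert (HL0 : L (S l) x = 0).
    { change (L (S l) x) with (laplacian_wo n m (L l) x). apply D1_lapwo.
      apply D_le with (K - 2*l)%nat. assert (H := lam_bound K). fold l in H. lia. auto. }
    rewrite HL0. unfold q. simpl. ring.
Qed.
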